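(* Let $a>0$ and let $F$ be a smooth function on $\mathbb H^2(-a^2)$; set $f=F\circ Y^{-1}$ on the Euclidean unit disc $D_O(1)$. Then, provided the right-hand side is finite, $$\|\overline\nabla(\nabla F)\|_{L^2(\mathbb H^2(-a^2))}^2\le 10a^2\int_{D_O(1)}\Big\{|\nabla^{\mathbb R^2}f|^2+(1-|y|^2)^2|\nabla^{\mathbb R^2}\nabla^{\mathbb R^2}f|^2\Big\}\,dy_1\,dy_2,$$ where $|\nabla^{\mathbb R^2}\nabla^{\mathbb R^2}f|^2=\sum_{i,j=1}^2|\partial_{y_i}\partial_{y_j}f|^2$.
   Context: $\mathbb H^2(-a^2)$ is realized as the hyperboloid $\{(x_0,x_1,x_2)\in\mathbb R^3: x_0^2-x_1^2-x_2^2=1/a^2,\ x_0>0\}$ with the metric induced by $-dx_0^2+dx_1^2+dx_2^2$; it is the two-dimensional hyperbolic space of constant curvature $-a^2$. $Y:\mathbb H^2(-a^2)\to D_O(1)=\{y\in\mathbb R^2:|y|<1\}$ is the global coordinate chart $Y(x)=(x_1,x_2)/(x_0+1/a)$, in which the metric is $g=\frac{4}{a^2(1-|y|^2)^2}(dy_1^2+dy_2^2)$. $\nabla F$ is the Riemannian gradient vector field of $F$, $\overline\nabla$ the Levi-Civita connection, and $|\overline\nabla(\nabla F)|$ the pointwise norm of this $(1,1)$-tensor with respect to the induced metric; $L^2$ is with respect to the Riemannian volume. $\nabla^{\mathbb R^2}$ denotes the Euclidean gradient on $D_O(1)$. *)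

(* Defs.v *)
From HB Require Import structures.
From mathcomp Require Import all_boot all_order all_algebra.
From mathcomp Require Import all_classical all_reals all_analysis.
Set Implicit Arguments. Unset Strict Implicit. Unset Printing Implicit Defensive.
Import Order.TTheory GRing.Theory Num.Theory.
Import numFieldNormedType.Exports.
Local Open Scope classical_set_scope.
Local Open Scope ring_scope.

Section Hyp.
Variable R : realType.

Definition coord (i : 'I_2) (y : R * R) : R := if val i == 0%N then y.1 else y.2.

Definition sqnorm (y : R * R) : R := y.1 ^+ 2 + y.2 ^+ 2.

Definition disc : set (R * R) := [set y | sqnorm y < 1].

Definition pd (i : 'I_2) (f : R * R -> R) : R * R -> R :=
  fun y => if val i == 0%N then derive1 (fun t => f (t, y.2)) y.1
           else derive1 (fun t => f (y.1, t)) y.2.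

Definition iter_pd (l : seq 'I_2) (f : R * R -> R) : R * R -> R :=
  foldr pd f l.

Definition smooth_on (D : set (R * R)) (f : R * R -> R) : Prop :=
  forall l : seq 'I_2,
    (forall y, D y -> {for y, continuous (iter_pd l f)}) /\
    (forall y, D y ->
       derivable (fun t => iter_pd l f (t, y.2)) y.1 1 /\
       derivable (fun t => iter_pd l f (y.1, t)) y.2 1).

(* Y^{-1} : D_O(1) -> H^2(-a^2) subset R^3, inverse of
   Y(x) = (x1, x2) / (x0 + 1/a). *)
Definition Yinv (a : R) (y : R * R) : R * R * R :=
  ((1 + sqnorm y) / (a * (1 - sqnorm y)),
   2 * y.1 / (a * (1 - sqnorm y)),
   2 * y.2 / (a * (1 - sqnorm y))).

(* conformal factor of the hyperbolic metric in the chart Y: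
   g = gconf a y (dy1^2 + dy2^2),  gconf a y = 4 / (a^2 (1-|y|^2)^2) *)
Definition gconf (a : R) (y : R * R) : R := 4 / (a ^+ 2 * (1 - sqnorm y) ^+ 2).

Definition gmet (a : R) (i j : 'I_2) (y : R * R) : R :=
  if i == j then gconf a y else 0.
Definition ginv (a : R) (i j : 'I_2) (y : R * R) : R :=
  if i == j then (gconf a y)^-1 else 0.

Definition christoffel (a : R) (k i j : 'I_2) (y : R * R) : R :=
  2^-1 * \sum_(l < 2) ginv a k l y *
    (pd i (gmet a j l) y + pd j (gmet a i l) y - pd l (gmet a i j) y).

(* components of the covariant Hessian (nabla-bar nabla F)_{ij}
   (lowered indices) in the chart Y, where f = F o Y^{-1} *)
Definition hess (a : R) (f : R * R -> R) (i j : 'I_2) (y : R * R) : R :=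
  pd i (pd j f) y - \sum_(k < 2) christoffel a k i j y * pd k f y.

(* pointwise squared norm |nabla-bar (nabla F)|^2 with respect to g:
   g^{ik} g^{jl} H_ij H_kl (same for the (1,1)-tensor H^i_j = g^{ik} H_kj) *)
Definition hess_sqnorm (a : R) (f : R * R -> R) (y : R * R) : R :=
  \sum_(i < 2) \sum_(j < 2) \sum_(k < 2) \sum_(l < 2)
    ginv a i k y * ginv a j l y * hess a f i j y * hess a f k l y.

(* Riemannian volume density sqrt(det g) in the chart Y *)
Definition voldens (a : R) (y : R * R) : R := Num.sqrt (gconf a y ^+ 2).

Definition leb2 := ((@lebesgue_measure R) \x (@lebesgue_measure R))%E.

(* ||nabla-bar (nabla F)||^2_{L^2(H^2(-a^2))}, computed through the global
   chart Y (extended-real valued, possibly +oo) *)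
Definition lhs_norm (a : R) (f : R * R -> R) : \bar R :=
  (\int[leb2]_(y in disc) (hess_sqnorm a f y * voldens a y)%:E)%E.

Definition egrad_sq (f : R * R -> R) (y : R * R) : R :=
  \sum_(i < 2) (pd i f y) ^+ 2.
Definition ehess_sq (f : R * R -> R) (y : R * R) : R :=
  \sum_(i < 2) \sum_(j < 2) (pd i (pd j f) y) ^+ 2.

Definition rhs_int (f : R * R -> R) : \bar R :=
  (\int[leb2]_(y in disc)
     (egrad_sq f y + (1 - sqnorm y) ^+ 2 * ehess_sq f y)%:E)%E.

End Hyp.

(* Main.v *)
Require Import Defs.
From HB Require Import structures.
From mathcomp Require Import all_boot all_order all_algebra.
From mathcomp Require Import all_classical all_reals all_analysis.
From mathcomp Require Import ring lra.
Import Order.TTheory GRing.Theory Num.Theory.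
Import numFieldNormedType.Exports.
Local Open Scope ring_scope.

Lemma der_g (R : realType) (a b t : R) : 0 < a -> t^+2 + b < 1 ->
  derive1 (fun s => 4 / (a^+2 * (1 - (s^+2 + b))^+2)) t
  = 4 / (a^+2 * (1 - (t^+2 + b))^+2) * (4 * t / (1 - (t^+2 + b))).
Proof.
move=> a0 tb.
pose Q : {poly R} := (4^-1 * a^+2)%:P * (1 - ('X^2 + b%:P))^+2.
have QE s : Q.[s] = 4^-1 * a^+2 * (1 - (s^+2 + b))^+2.
  by rewrite /Q !hornerE.
have -> : (fun s => 4 / (a^+2 * (1 - (s^+2 + b))^+2)) = (fun s => (Q.[s])^-1).
  by apply/funext => s; rewrite QE -mulrA [RHS]invfM invrK mulrC.
have cne : 1 - (t^+2 + b) != 0 by rewrite subr_eq0 gt_eqF.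
have Qne : Q.[t] != 0.
  by rewrite QE !mulf_neq0 // ?invr_eq0 ?pnatr_eq0 // ?expf_neq0 // gt_eqF.
have := @derive_val _ _ _ _ _ _ _ (is_deriveV Qne (is_derive_poly Q t)).
move=> H. match goal with |- _ = ?r => change (derive1 (fun s : R => Q.[s]^-1) t = r) end. rewrite derive1E. apply: etrans; first exact: H.
have dQ : Q^`().[t] = 4^-1 * a^+2 * (2 * (1 - (t^+2 + b)) * (- (2 * t))).
  rewrite /Q derivM derivC mul0r add0r expr2 derivM !derivB !derivD derivXn -polyC1 !derivC !hornerE /=.
  ring.
rewrite dQ QE.
rewrite -[LHS]/(- (_) ^- 2 * _).
have a2 : a != 0 by rewrite gt_eqF.
field.
by rewrite cne a2.
Qed.

Lemma final_ineq (R : realType) (a' c y1 y2 f1 f2 f11 f12 f21 f22 : R) : 0 < c ->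
  c = 1 - (y1^+2 + y2^+2) ->
  a'^+2/4 * ((c * f11 - 2 * (y1 * f1 - y2 * f2))^+2 + (c * f12 - 2 * (y2 * f1 + y1 * f2))^+2
     + (c * f21 - 2 * (y2 * f1 + y1 * f2))^+2 + (c * f22 + 2 * (y1 * f1 - y2 * f2))^+2)
  <= 10 * a'^+2 * (f1^+2 + f2^+2 + c^+2 * (f11^+2 + f12^+2 + f21^+2 + f22^+2)).
Proof.
move=> c0 ce.
set B1 := 2 * (y1 * f1 - y2 * f2); set B2 := 2 * (y2 * f1 + y1 * f2).
have hB : B1^+2 + B2^+2 <= 4 * (f1^+2 + f2^+2).
  have -> : B1^+2 + B2^+2 = 4 * (y1^+2 + y2^+2) * (f1^+2 + f2^+2) by rewrite /B1 /B2; ring.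
  have s1 : y1^+2 + y2^+2 <= 1 by lra.
  have F0 : 0 <= f1^+2 + f2^+2 by rewrite addr_ge0 // sqr_ge0.
  nra.
have hS : forall x b : R, (x - b)^+2 <= 2 * x^+2 + 2 * b^+2.
  move=> x b; rewrite -subr_ge0.
  have -> : 2 * x ^+ 2 + 2 * b ^+ 2 - (x - b) ^+ 2 = (x + b)^+2 by ring.
  exact: sqr_ge0.
have e4 : c * f22 + B1 = c * f22 - (- B1) by rewrite opprK.
rewrite e4.
have h1 := hS (c * f11) B1; have h2 := hS (c * f12) B2;
have h3 := hS (c * f21) B2; have h4 := hS (c * f22) (- B1).
rewrite sqrrN in h4.
set S := (_ + _ + _ + _).
have hS' : S <= 2 * c^+2 * (f11^+2 + f12^+2 + f21^+2 + f22^+2) + 16 * (f1^+2 + f2^+2).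
  rewrite /S; move: h1 h2 h3 h4; rewrite ![(c * _)^+2]exprMn.
  have -> : 2 * c^+2 * (f11^+2 + f12^+2 + f21^+2 + f22^+2) =
    2 * (c^+2 * f11^+2) + 2 * (c^+2 * f12^+2) + 2 * (c^+2 * f21^+2) + 2 * (c^+2 * f22^+2) by ring.
  move: hB; lra.
have a2 : 0 <= a'^+2 by exact: sqr_ge0.
have c2 : 0 <= c^+2 * (f11^+2 + f12^+2 + f21^+2 + f22^+2).
  by rewrite mulr_ge0 ?sqr_ge0 // !addr_ge0 // sqr_ge0.
have F0 : 0 <= f1^+2 + f2^+2 by rewrite addr_ge0 // sqr_ge0.
apply: (le_trans (y := a'^+2/4 * (2 * c^+2 * (f11^+2 + f12^+2 + f21^+2 + f22^+2) + 16 * (f1^+2 + f2^+2)))).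
  by rewrite ler_wpM2l // divr_ge0.
rewrite -subr_ge0.
have -> : 10 * a' ^+ 2 * (f1 ^+ 2 + f2 ^+ 2 + c ^+ 2 * (f11 ^+ 2 + f12 ^+ 2 + f21 ^+ 2 + f22 ^+ 2)) -
  a' ^+ 2 / 4 * (2 * c ^+ 2 * (f11 ^+ 2 + f12 ^+ 2 + f21 ^+ 2 + f22 ^+ 2) + 16 * (f1 ^+ 2 + f2 ^+ 2))
  = a'^+2 * (6 * (f1 ^+ 2 + f2 ^+ 2) + (19/2) * (c ^+ 2 * (f11 ^+ 2 + f12 ^+ 2 + f21 ^+ 2 + f22 ^+ 2))).
  by field.
apply: mulr_ge0 => //; apply: addr_ge0; apply: mulr_ge0 => //.
Qed.

Lemma eq_alg (R : realType) (a c y1 y2 f1 f2 f11 f12 f21 f22 : R) : a != 0 -> c != 0 ->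
  (4 / (a ^+ 2 * c ^+ 2))^-1 ^+ 2 *
  ((f11 - (2 * y1 / c * f1 - 2 * y2 / c * f2)) ^+ 2 +
   (f12 - (2 * y2 / c * f1 + 2 * y1 / c * f2)) ^+ 2 +
   (f21 - (2 * y2 / c * f1 + 2 * y1 / c * f2)) ^+ 2 +
   (f22 - (- (2 * y1 / c * f1) + 2 * y2 / c * f2)) ^+ 2) * (4 / (a ^+ 2 * c ^+ 2))
  = a ^+ 2 / 4 *
  ((c * f11 - 2 * (y1 * f1 - y2 * f2)) ^+ 2 +
   (c * f12 - 2 * (y2 * f1 + y1 * f2)) ^+ 2 +
   (c * f21 - 2 * (y2 * f1 + y1 * f2)) ^+ 2 +
   (c * f22 + 2 * (y1 * f1 - y2 * f2)) ^+ 2).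
Proof.
move=> an cn.
field. by rewrite an cn.
Qed.

Section P.
Variable R : realType.
Variables (a : R) (y : R * R).
Hypothesis a0 : 0 < a.
Hypothesis dy : @disc R y.

Let c := 1 - sqnorm y.
Lemma c_gt0 : 0 < c.
Proof. by rewrite /c subr_gt0. Qed.

Lemma pd_gconf i : pd i (gconf a) y = gconf a y * (4 * Defs.coord i y / c).
Proof.
have := dy; rewrite /disc /= /sqnorm => dy'.
rewrite /pd /gconf /Defs.coord /c /sqnorm; case: ifP => _.
  by rewrite (@der_g R a (y.2^+2) y.1 a0).
rewrite (_ : (fun t => _) = (fun t => 4 / (a^+2 * (1 - (t^+2 + y.1^+2))^+2))).
  by rewrite (@der_g R a (y.1^+2) y.2 a0) ?[_ + y.1 ^+ 2]addrC // addrC.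
by apply/funext => t /=; rewrite [_ + t^+2]addrC.
Qed.


Lemma gconf_gt0 : 0 < gconf a y.
Proof.
have := c_gt0; rewrite /gconf /c => c0.
by rewrite divr_gt0 // mulr_gt0 // exprn_gt0.
Qed.

Lemma pd_gmet i j l : pd i (gmet a j l) y =
  if j == l then gconf a y * (4 * Defs.coord i y / c) else 0.
Proof.
rewrite /gmet; case: eqP => _; first exact: pd_gconf.
by rewrite /pd; case: ifP => _; exact: derive1_cst.
Qed.

Let q i := 2 * Defs.coord i y / c.

Lemma christ k i j : christoffel a k i j y =
  (j == k)%:R * q i + (i == k)%:R * q j - (i == j)%:R * q k.
Proof.
rewrite /christoffel (bigD1 k) //= big1 ?addr0; last first.
  by move=> l lk; rewrite /ginv eq_sym (negbTE lk) mul0r.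
rewrite /ginv eqxx !pd_gmet.
have g0 := gconf_gt0; have c0 := c_gt0.
have g1 : gconf a y != 0 by rewrite gt_eqF.
have c1 : c != 0 by rewrite gt_eqF.
rewrite /q.
case: (j == k); case: (i == k); case: (i == j) => /=; field; try (apply/andP; split); assumption.
Qed.

Lemma sum4 (G : R) (H : 'I_2 -> 'I_2 -> R) :
  \sum_(i < 2) \sum_(j < 2) \sum_(k < 2) \sum_(l < 2)
    (if i == k then G else 0) * (if j == l then G else 0) * H i j * H k l
  = G ^+ 2 * \sum_(i < 2) \sum_(j < 2) H i j ^+ 2.
Proof. rewrite !big_ord_recr !big_ord0 /=; ring. Qed.

Lemma sum2 (F : 'I_2 -> R) : \sum_(i < 2) F i = F ord0 + F ord_max.
Proof.
rewrite !big_ord_recr big_ord0 /=.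
have -> : widen_ord (leqnSn 1) ord_max = ord0 :> 'I_2 by apply/val_inj.
ring.
Qed.

Lemma sum22 (F : 'I_2 -> 'I_2 -> R) : \sum_(i < 2) \sum_(j < 2) F i j =
  F ord0 ord0 + F ord0 ord_max + F ord_max ord0 + F ord_max ord_max.
Proof. by rewrite sum2 !sum2 addrA. Qed.

Lemma e01 : ((ord0 : 'I_2) == ord_max) = false. Proof. by []. Qed.
Lemma e10 : ((ord_max : 'I_2) == ord0) = false. Proof. by []. Qed.

Let f0 f := pd ord0 f y.
Let f1 f := pd ord_max f y.

Lemma hess00 f : hess a f ord0 ord0 y = pd ord0 (pd ord0 f) y - (q ord0 * f0 f - q ord_max * f1 f).
Proof. rewrite /hess sum2 !christ !eqxx ?e01 ?e10 /f0 /f1. rewrite /=. ring. Qed.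

Lemma hess01 f : hess a f ord0 ord_max y = pd ord0 (pd ord_max f) y - (q ord_max * f0 f + q ord0 * f1 f).
Proof. rewrite /hess sum2 !christ !eqxx ?e01 ?e10 /f0 /f1. rewrite /=. ring. Qed.
Lemma hess10 f : hess a f ord_max ord0 y = pd ord_max (pd ord0 f) y - (q ord_max * f0 f + q ord0 * f1 f).
Proof. rewrite /hess sum2 !christ !eqxx ?e01 ?e10 /f0 /f1. rewrite /=. ring. Qed.
Lemma hess11 f : hess a f ord_max ord_max y = pd ord_max (pd ord_max f) y - (- (q ord0 * f0 f) + q ord_max * f1 f).
Proof. rewrite /hess sum2 !christ !eqxx ?e01 ?e10 /f0 /f1. rewrite /=. ring. Qed.

Lemma q0E : q ord0 = 2 * y.1 / c. Proof. by []. Qed.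
Lemma q1E : q ord_max = 2 * y.2 / c. Proof. by []. Qed.

Lemma main_pt (f : R * R -> R) : hess_sqnorm a f y * voldens a y <=
  10 * a ^+ 2 * (egrad_sq f y + (1 - sqnorm y) ^+ 2 * ehess_sq f y).
Proof.
have g0 := gconf_gt0; have c0 := c_gt0.
have -> : hess_sqnorm a f y = (gconf a y)^-1 ^+2 * \sum_(i < 2) \sum_(j < 2) (hess a f i j y)^+2.
  exact: (sum4 _ (fun i j => hess a f i j y)).
have -> : voldens a y = gconf a y by rewrite /voldens sqrtr_sqr ger0_norm // ltW.
have cE : 1 - sqnorm y = c by [].
rewrite /egrad_sq /ehess_sq.
rewrite (sum2 (fun i => pd i f y ^+ 2)).
rewrite (sum22 (fun i j => pd i (pd j f) y ^+ 2)).
rewrite (sum22 (fun i j => hess a f i j y ^+ 2)).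
rewrite hess00 hess01 hess10 hess11.
rewrite q0E q1E.
rewrite cE.
have gE : gconf a y = 4 / (a^+2 * c^+2) by [].
have ce : c = 1 - (y.1^+2 + y.2^+2) by [].
have := @final_ineq R a c y.1 y.2 (f0 f) (f1 f) (pd ord0 (pd ord0 f) y) (pd ord0 (pd ord_max f) y)
  (pd ord_max (pd ord0 f) y) (pd ord_max (pd ord_max f) y) c0 ce.
move=> H; apply: (le_trans _ H).
rewrite le_eqVlt; apply/orP; left; apply/eqP.
have an : a != 0 by rewrite gt_eqF.
have cn : c != 0 by rewrite gt_eqF.
rewrite gE /f0 /f1.
exact: eq_alg.
Qed.
Lemma main_ge0 (f : R * R -> R) : 0 <= hess_sqnorm a f y * voldens a y.
Proof.
have -> : hess_sqnorm a f y = (gconf a y)^-1 ^+2 * \sum_(i < 2) \sum_(j < 2) (hess a f i j y)^+2.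
  exact: (sum4 _ (fun i j => hess a f i j y)).
apply: mulr_ge0; last exact: sqrtr_ge0.
apply: mulr_ge0; first exact: sqr_ge0.
by apply: sumr_ge0 => i _; apply: sumr_ge0 => j _; exact: sqr_ge0.
Qed.
End P.

Import HBNNSimple.
Section IL.
Lemma int_le (R : realType) (L Rr : R * R -> R) (k : R) : 0 < k ->
  (forall y, @disc R y -> 0 <= L y) -> (forall y, @disc R y -> L y <= k * Rr y) ->
  (\int[@leb2 R]_(y in @disc R) (L y)%:E <= k%:E * \int[@leb2 R]_(y in @disc R) (Rr y)%:E)%E.
Proof.
Local Open Scope ereal_scope.
move=> k0 L0 LR.
rewrite integral_mkcond [X in (_ <= _ * X)%E]integral_mkcond.
have R0 : forall y, @disc R y -> (0 <= Rr y)%R.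
  move=> y dy; have := le_trans (L0 y dy) (LR y dy).
  by rewrite pmulr_rge0.
rewrite !ge0_integralTE; last 2 first.
- by move=> x; rewrite /patch; case: ifPn => // /set_mem dx; rewrite lee_fin R0.
- by move=> x; rewrite /patch; case: ifPn => // /set_mem dx; rewrite lee_fin L0.
apply: ge_ereal_sup => _ [h /= hL <-].
have ki : (0 <= k^-1)%R by rewrite invr_ge0 ltW.
have -> : sintegral (@leb2 R) h = k%:E * sintegral (@leb2 R) (scale_nnsfun h ki).
  rewrite /scale_nnsfun sintegralrM muleA -EFinM mulfV ?gt_eqF // mul1e //.
rewrite lee_pmul2l ?lte_fin //; last first.
apply: ereal_sup_ubound; exists (scale_nnsfun h ki) => //= x.
have := hL x; rewrite /patch; case: ifPn => [/set_mem dx|_].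
  rewrite !lee_fin => hx.
  by rewrite ler_pdivrMl // (le_trans hx) // LR.
have -> : (point : \bar R) = 0 by [].
rewrite !lee_fin => hx.
by rewrite mulr_ge0_le0 // ltW.
Qed.
End IL.

Theorem lemma3p1 (R : realType) (a : R) (F : R * R * R -> R) :
  0 < a ->
  smooth_on (@disc R) (F \o Yinv a) ->
  (rhs_int (F \o Yinv a) < +oo)%E ->
  (lhs_norm a (F \o Yinv a) <= (10 * a ^+ 2)%:E * rhs_int (F \o Yinv a))%E.
Proof.
move=> a0 _ _.
rewrite /lhs_norm /rhs_int.
apply: (@int_le R (fun y => hess_sqnorm a (F \o Yinv a) y * voldens a y)
               (fun y => egrad_sq (F \o Yinv a) y + (1 - sqnorm y) ^+ 2 * ehess_sq (F \o Yinv a) y)).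
- by rewrite mulr_gt0 // exprn_gt0.
- by move=> y dy; exact: main_ge0.
- by move=> y dy; exact: main_pt.
Qed.
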